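(* For any signature $\Sigma$, any $\Sigma$-forest-like alphabets $A_1,A_2$ and any reduced $\Sigma$-forest $f$, $$\theta_{A_1,A_2}\big(r_{A_1\mathbin{+\!\!+}A_2}(E_f)\big)=(r_{A_1}\otimes r_{A_2})(\Delta E_f).$$
   Context: $\mathbb K$ is a field of characteristic zero; $[P]$ is $1$ if $P$ holds, $0$ otherwise. A signature is a set $\Sigma$ with arity map $|\cdot|:\Sigma\to\mathbb N$, $\Sigma(n)$ the elements of arity $n$. A $\Sigma$-term is the leaf $\bot$ or $s(t_1,\dots,t_n)$ with $s\in\Sigma(n)$, $t_i$ terms; degree = number of internal nodes, arity $|t|$ = number of leaves. $T(\Sigma)$ is the free operad: $t[t_1,\dots,t_{|t|}]$ grafts $t_i$ on the $i$-th leaf of $t$. A $\Sigma$-forest is a finite word of terms; reduced if no term is $\bot$; $\mathrm{rd}$ deletes terms equal to $\bot$. Internal nodes of a forest $f$ are identified with $1,\dots,\deg f$ by preorder; $d_f(i)$ is the decoration of $i$; $i\to^f_j i'$ means $i'$ is the $j$-th child of $i$; roots are the roots of the terms. $\mathbf N(T(\Sigma))$: basis $E_f$ ($f$ reduced forest), product $E_{f_1}E_{f_2}=E_{f_1f_2}$, coproduct the algebra morphism with $\Delta E_t=\sum E_{\mathrm{rd}(t')}\otimes E_{\mathrm{rd}(t_1\cdots t_{|t'|})}$ over all $t',t_1,\dots$ with $t=t'[t_1,\dots,t_{|t'|}]$. A $\Sigma$-forest-like alphabet is a set $A$ with arbitrary: subset $R^A$, subsets $D^A_s$ ($s\in\Sigma$),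 binary relations $\to^A_j$ ($j\ge1$). $\mathbb K\langle A\rangle$: noncommutative polynomials over $A$ with possibly infinite support but bounded degree. A word $w\in A^*$ is $A$-compatible with $f$ if it has length $\deg f$, $w(i)\in R^A$ for each root $i$, $w(i)\in D^A_{d_f(i)}$ for each node $i$, and $i\to^f_j i'$ implies $w(i)\to^A_j w(i')$. $r_A(E_f)=\sum_{w\in A^*}[w\ A\text{-compatible with }f]\,w$, extended linearly. The disjoint sum $A_1\mathbin{+\!\!+}A_2$ is $A_1\sqcup A_2$ with $R=R^{A_1}\sqcup R^{A_2}$, $D_s=D^{A_1}_s\sqcup D^{A_2}_s$, and $a\to_j a'$ iff ($a,a'\in A_1$, $a\to^{A_1}_j a'$) or ($a,a'\in A_2$, $a\to^{A_2}_j a'$) or ($a\in A_1$, $a'\in A_2$, $a'\in R^{A_2}$). $\theta_{A_1,A_2}:\mathbb K\langle A_1\sqcup A_2\rangle\to\mathbb K\langle A_1\rangle\otimes\mathbb K\langle A_2\rangle$ is the linear map $w\mapsto w_{|A_1}\otimes w_{|A_2}$ ($w_{|B}$ the subword of letters in $B$). *)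

(* Defs.v *)
From mathcomp Require Import all_boot all_algebra.
Set Implicit Arguments. Unset Strict Implicit. Unset Printing Implicit Defensive.
Import GRing.Theory.
Local Open Scope ring_scope.

(* Terms: the leaf ⊥ ([Leaf]) or s(t_1,...,t_n) ([Node s [:: t_1; ...; t_n]]);
   well-formedness (n = |s|) is the predicate [wf_term ar]. *)
Inductive term (Sig : Type) : Type :=
| Leaf : term Sig
| Node : Sig -> seq (term Sig) -> term Sig.
Arguments Leaf {Sig}.

Section Terms.
Variable Sig : Type.
Variable ar : Sig -> nat.

Fixpoint wf_term (t : term Sig) : bool :=
  match t with
  | Leaf => true
  | Node s ch =>
    (size ch == ar s) &&
    (fix go (l : seq (term Sig)) : bool :=
       match l with [::] => true | c :: l' => wf_term c && go l' end) ch
  end.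

Definition is_node (t : term Sig) : bool := if t is Node _ _ then true else false.

Definition forest := seq (term Sig).

Definition reduced_forest (f : forest) : bool := all wf_term f && all is_node f.

Definition rd (f : forest) : forest := filter is_node f.

Fixpoint tarity (t : term Sig) : nat :=
  match t with
  | Leaf => 1
  | Node _ ch =>
    (fix go (l : seq (term Sig)) : nat :=
       match l with [::] => 0 | c :: l' => tarity c + go l' end) ch
  end.

(* Grafting t[t_1,...,t_|t|]: graft the i-th term of [ts] on the i-th leaf
   (returns the graft together with the unused terms). *)
Fixpoint graft_aux (t : term Sig) (ts : seq (term Sig)) : term Sig * seq (term Sig) :=
  match t with
  | Leaf => if ts is u :: ts' then (u, ts') else (Leaf, [::])
  | Node s ch =>
    let fix go (l : seq (term Sig)) (ts : seq (term Sig)) :=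
      match l with
      | [::] => ([::], ts)
      | c :: l' =>
        let p := graft_aux c ts in
        let q := go l' p.2 in (p.1 :: q.1, q.2)
      end in
    let q := go ch ts in (Node s q.1, q.2)
  end.
Definition graft (t : term Sig) (ts : seq (term Sig)) : term Sig := (graft_aux t ts).1.

(* All decompositions t = t'[t_1,...,t_|t'|], as the list of pairs
   (t', [:: t_1; ...; t_|t'|]); each decomposition listed exactly once:
   either t' = ⊥ (and t_1 = t), or t = s(c_1..c_n), t' = s(c'_1..c'_n) with
   each c_i = c'_i[...] a decomposition of c_i. *)
Fixpoint decomps (t : term Sig) : seq (term Sig * seq (term Sig)) :=
  match t with
  | Leaf => [:: (Leaf, [:: Leaf])]
  | Node s ch =>
    let fix go (l : seq (term Sig)) : seq (seq (term Sig) * seq (term Sig)) :=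
      match l with
      | [::] => [:: ([::], [::])]
      | c :: l' =>
        [seq (p.1 :: q.1, p.2 ++ q.2) | p <- decomps c, q <- go l']
      end in
    (Leaf, [:: t]) :: [seq (Node s q.1, q.2) | q <- go ch]
  end.

(* Coproduct of N(T(Sig)) on a basis element E_f, as a list (with
   multiplicity) of pairs (g, h) standing for E_g ⊗ E_h.  Δ is the algebra
   morphism with Δ E_t = Σ E_rd(t') ⊗ E_rd(t_1...t_|t'|); since
   E_{f1} E_{f2} = E_{f1 f2} and the product of E_g⊗E_h and E_g'⊗E_h' is
   E_{gg'} ⊗ E_{hh'}, Δ E_{t f'} = Δ E_t · Δ E_{f'}. *)
Fixpoint coprod (f : forest) : seq (forest * forest) :=
  match f with
  | [::] => [:: ([::], [::])]
  | t :: f' =>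
    [seq (rd [:: p.1] ++ q.1, rd p.2 ++ q.2) | p <- decomps t, q <- coprod f']
  end.

(* [tinfo t] = (decorations of the internal nodes of t in preorder,
               edges (i, j, i') meaning "i' is the j-th child of i"),
   internal nodes numbered 0,1,... in preorder (0-based). *)
Fixpoint tinfo (t : term Sig) : seq Sig * seq (nat * nat * nat) :=
  match t with
  | Leaf => ([::], [::])
  | Node s ch =>
    let fix go (l : seq (term Sig)) (k off : nat)
        : seq Sig * seq (nat * nat * nat) :=
      match l with
      | [::] => ([::], [::])
      | c :: l' =>
        let p := tinfo c in
        let q := go l' k.+1 (off + size p.1) in
        (p.1 ++ q.1,
         (if is_node c then [:: (0%N, k, off)] else [::])
           ++ [seq (e.1.1 + off, e.1.2, e.2 + off)%N | e <- p.2] ++ q.2)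
      end in
    let q := go ch 1 1 in (s :: q.1, q.2)
  end.

(* [finfo f] = (decorations in preorder, indices of the roots, edges). *)
Fixpoint finfo_aux (f : forest) (off : nat)
  : seq Sig * seq nat * seq (nat * nat * nat) :=
  match f with
  | [::] => ([::], [::], [::])
  | t :: f' =>
    let p := tinfo t in
    let q := finfo_aux f' (off + size p.1) in
    (p.1 ++ q.1.1,
     (if is_node t then [:: off] else [::]) ++ q.1.2,
     [seq (e.1.1 + off, e.1.2, e.2 + off)%N | e <- p.2] ++ q.2)
  end.
Definition finfo (f : forest) := finfo_aux f 0.

Definition fdeg (f : forest) : nat := size (finfo f).1.1.

End Terms.

(* A Sig-forest-like alphabet on the set (type) A: subsets R^A, D^A_s and
   binary relations ->^A_j (j >= 1), given by their characteristic functions. *)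
Record fla (Sig A : Type) := FLA {
  rootP : pred A;
  decP  : Sig -> pred A;
  arrP  : nat -> rel A }.

Section Alphabets.
Variable Sig : Type.

Definition compatible (A : Type) (B : fla Sig A) (f : forest Sig) (w : seq A) : bool :=
  let: (ds, roots, es) := finfo f in
  [&& size w == size ds,
      all (fun i => if onth w i is Some a then rootP B a else false) roots,
      all (fun p => decP B p.1 p.2) (zip ds w) &
      all (fun e => match onth w e.1.1, onth w e.2 with
                    | Some a, Some a' => arrP B e.1.2 a a'
                    | _, _ => false end) es].

(* Elements of K<A> are represented by their coefficient functions
   (seq A -> K); r_A(E_f) = Σ_w [w A-compatible with f] w. *)
Definition r_alpha (K : fieldType) (A : Type) (B : fla Sig A) (f : forest Sig)
  : seq A -> K :=
  fun w => (compatible B f w)%:R.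

Definition sum_fla (A1 A2 : Type) (B1 : fla Sig A1) (B2 : fla Sig A2)
  : fla Sig (A1 + A2) :=
  FLA (fun x => match x with inl a => rootP B1 a | inr b => rootP B2 b end)
      (fun s x => match x with inl a => decP B1 s a | inr b => decP B2 s b end)
      (fun j x y => match x, y with
                    | inl a, inl a' => arrP B1 j a a'
                    | inr b, inr b' => arrP B2 j b b'
                    | inl _, inr b' => rootP B2 b'
                    | inr _, inl _ => false end).

End Alphabets.

Section Theta.
Variables A1 A2 : Type.

Definition restr1 (w : seq (A1 + A2)) : seq A1 :=
  pmap (fun x => if x is inl a then Some a else None) w.
Definition restr2 (w : seq (A1 + A2)) : seq A2 :=
  pmap (fun x => if x is inr b then Some b else None) w.

(* [shuffle u v] lists (without repetition) all words w over A1 ⊔ A2 with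
   w_{|A1} = u and w_{|A2} = v. *)
Fixpoint shuffle (u : seq A1) (v : seq A2) : seq (seq (A1 + A2)) :=
  match u with
  | [::] => [:: map inr v]
  | a :: u' =>
    let fix sh2 (v : seq A2) :=
      match v with
      | [::] => [:: map inl u]
      | b :: v' => [seq inl a :: w | w <- shuffle u' v] ++ [seq inr b :: w | w <- sh2 v']
      end in sh2 v
  end.

(* Elements of K<A1> ⊗ K<A2> are represented by coefficient functions
   on pairs of words (this contains the algebraic tensor product and is where
   θ of an infinite-support polynomial lives).
   θ(P)(u, v) = Σ_{w : w_{|A1} = u, w_{|A2} = v} P(w). *)
Definition theta (K : fieldType) (P : seq (A1 + A2) -> K) : seq A1 * seq A2 -> K :=
  fun uv => \sum_(w <- shuffle uv.1 uv.2) P w.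

End Theta.

(* (r_{A1} ⊗ r_{A2}) applied to Σ_{(g,h) in l} E_g ⊗ E_h *)
Definition tensor_r (K : fieldType) (Sig A1 A2 : Type) (B1 : fla Sig A1) (B2 : fla Sig A2)
  (l : seq (forest Sig * forest Sig)) : seq A1 * seq A2 -> K :=
  fun uv => \sum_(gh <- l) r_alpha K B1 gh.1 uv.1 * r_alpha K B2 gh.2 uv.2.

(* Main.v *)
Require Import Defs.
From mathcomp Require Import all_boot all_algebra zify.
Set Implicit Arguments. Unset Strict Implicit. Unset Printing Implicit Defensive.
Import GRing.Theory.
Require Import Defs.

Lemma onth_drop (T : Type) (s : seq T) n i : onth (drop n s) i = onth s (n + i).
Proof. by elim: n s => [|n IH] [|x s] //=; rewrite onth0n. Qed.

Lemma onth_take (T : Type) (s : seq T) n i : i < n -> onth (take n s) i = onth s i.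
Proof. by elim: n s i => [|n IH] [|x s] [|i] //= /IH. Qed.

Section Trees.
Variable Sig : Type.

Lemma term_ind2 (P : term Sig -> Prop) : P Leaf ->
  (forall s ch, foldr (fun c acc => P c /\ acc) True ch -> P (Node s ch)) ->
  forall t, P t.
Proof.
move=> HL HN.
refine (fix rec t := match t with Leaf => HL | Node s ch => HN s ch _ end).
elim: ch => [|c l IH] /=; first by []. split; [exact: rec | exact: IH].
Qed.

Fixpoint tgo (l : seq (term Sig)) (k off : nat) : seq Sig * seq (nat * nat * nat) :=
  match l with
  | [::] => ([::], [::])
  | c :: l' =>
    let p := tinfo c in
    let q := tgo l' k.+1 (off + size p.1) in
    (p.1 ++ q.1,
     (if is_node c then [:: (0%N, k, off)] else [::])
       ++ [seq (e.1.1 + off, e.1.2, e.2 + off)%N | e <- p.2] ++ q.2)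
  end.

Lemma tinfo_node s ch : tinfo (Node s ch) = (s :: (tgo ch 1 1).1, (tgo ch 1 1).2).
Proof. by []. Qed.

Definition nn (t : term Sig) := size (tinfo t).1.

Lemma tgo1 l k off : (tgo l k off).1 = flatten [seq (tinfo c).1 | c <- l].
Proof. by elim: l k off => //= c l IH k off; rewrite IH. Qed.

Lemma nn_node s ch : nn (Node s ch) = (sumn (map nn ch)).+1.
Proof.
rewrite /nn tinfo_node /= tgo1 size_flatten /shape -map_comp; by [].
Qed.

Lemma nn_leaf : nn Leaf = 0. Proof. by []. Qed.

Lemma nn_pos t : is_node t -> 0 < nn t.
Proof. by case: t => // s ch; rewrite nn_node. Qed.

Definition ebound n (e : nat * nat * nat) := (e.1.1 < n) && (e.2 < n).

Lemma tgo_bound l k off : 0 < off ->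
  foldr (fun c acc => all (ebound (nn c)) (tinfo c).2 /\ acc) True l ->
  all (ebound (off + sumn (map nn l))) (tgo l k off).2.
Proof.
elim: l k off => //= c l IH k off off0 [Hc Hl].
rewrite !all_cat; apply/and3P; split.
- case: ifP => // /nn_pos Hp /=; rewrite /ebound /=.
  apply/andP; split; lia.
- rewrite all_map; apply/allP => e /(allP Hc) /andP[H1 H2]; rewrite /ebound /=.
  apply/andP; split; lia.
- have := IH k.+1 (off + nn c) (ltn_addr _ off0) Hl.
  by rewrite -addnA.
Qed.

Fixpoint kidsA (X : Type) (F : nat -> X) (k : nat) (ch : seq (term Sig)) : seq (X * term Sig) :=
  match ch with
  | [::] => [::]
  | c :: l => (F k, c) :: kidsA F k.+1 l
  end.

Definition nnL (X : Type) (L : seq (X * term Sig)) := sumn [seq nn e.2 | e <- L].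

Lemma nnL_cat X (L1 L2 : seq (X * term Sig)) : nnL (L1 ++ L2) = nnL L1 + nnL L2.
Proof. by rewrite /nnL map_cat sumn_cat. Qed.

Lemma nnL_kids X (F : nat -> X) k ch : nnL (kidsA F k ch) = sumn (map nn ch).
Proof. by elim: ch k => //= c l IH k; rewrite /nnL /= -/(nnL _) IH. Qed.

Section Comp.
Variable A : Type.
Variable B : fla Sig A.

Definition kids (a : A) ch := kidsA (fun k => arrP B k a) 1 ch.

Fixpoint comp (w : seq A) (L : seq (pred A * term Sig)) {struct w} : bool :=
  let fix skip (L : seq (pred A * term Sig)) : bool :=
    match L with
    | [::] => if w is [::] then true else false
    | (P, Leaf) :: L' => skip L'
    | (P, Node s ch) :: L' =>
      match w with
      | [::] => false
      | a :: w' => P a && (decP B s a && comp w' (kids a ch ++ L'))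
      end
    end in skip L.

Lemma comp_nil w : comp w [::] = nilp w. Proof. by case: w. Qed.
Lemma comp_leaf w P L : comp w ((P, Leaf) :: L) = comp w L. Proof. by case: w. Qed.
Lemma comp_node0 P s ch L : comp [::] ((P, Node s ch) :: L) = false. Proof. by []. Qed.
Lemma comp_node a w P s ch L : comp (a :: w) ((P, Node s ch) :: L) =
   P a && (decP B s a && comp w (kids a ch ++ L)).
Proof. by []. Qed.

Lemma comp_cat w L1 L2 :
  comp w (L1 ++ L2) = comp (take (nnL L1) w) L1 && comp (drop (nnL L1) w) L2.
Proof.
elim: w L1 => [|x w IHw] L1.
  elim: L1 => [|[P [|s ch]] L1 IHL] /=; rewrite ?comp_leaf ?comp_nil //=.
elim: L1 => [|[P [|s ch]] L1 IHL].
- by rewrite take0 drop0 comp_nil.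
- have -> : nnL ((P,Leaf)::L1) = nnL L1 by [].
  by rewrite cat_cons !comp_leaf IHL.
- have -> : nnL ((P,Node s ch)::L1) = (nnL (kids x ch ++ L1)).+1.
    by rewrite nnL_cat nnL_kids /nnL /= nn_node.
  by rewrite cat_cons /= catA IHw -!andbA.
Qed.

Lemma comp_size w L : comp w L -> size w = nnL L.
Proof.
elim: w L => [|x w IHw] L.
  by elim: L => [|[P [|s ch]] L IHL] //.
elim: L => [|[P [|s ch]] L IHL] //.
rewrite comp_node => /and3P[_ _ /IHw] /= ->.
by rewrite nnL_cat nnL_kids /nnL /= nn_node.
Qed.

Definition filt (X : Type) (L : seq (X * term Sig)) := filter (fun e => is_node e.2) L.

Lemma comp_filt w L : comp w (filt L) = comp w L.
Proof.
elim: w L => [|x w IHw] L.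
  by elim: L => [|[P [|s ch]] L IHL] //=; rewrite comp_leaf.
elim: L => [|[P [|s ch]] L IHL] //=.
have E X Y : filt X = filt Y -> comp w X = comp w Y by move=> e; rewrite -IHw e IHw.
by rewrite (E _ (kids x ch ++ L)) // /filt !filter_cat filter_id.
Qed.

Ltac bsolve := repeat (match goal with
  | |- context [ ?x && _ ] =>
  lazymatch x with true => fail | false => fail | _ && _ => fail | _ => let b := fresh "b" in generalize x; intro b; destruct b end
  | |- context [ _ && ?x ] =>
  lazymatch x with true => fail | false => fail | _ && _ => fail | _ => let b := fresh "b" in generalize x; intro b; destruct b end
  end; rewrite ?andbT ?andbF ?andTb ?andFb); done.

Definition echeck (W : seq A) (e : nat * nat * nat) : bool :=
  match onth W e.1.1, onth W e.2 with
  | Some a, Some a' => arrP B e.1.2 a a'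
  | _, _ => false end.

Definition rchk (P : pred A) (W : seq A) : bool :=
  if onth W 0 is Some a then P a else false.

Definition dchk (ds : seq Sig) (W : seq A) := all (fun p => decP B p.1 p.2) (zip ds W).

Definition tchk (P : pred A) (t : term Sig) (W : seq A) : bool :=
  [&& size W == nn t, (if is_node t then rchk P W else true),
      dchk (tinfo t).1 W & all (echeck W) (tinfo t).2].

Lemma echeck_shift W off e :
  echeck W (e.1.1 + off, e.1.2, e.2 + off)%N = echeck (drop off W) e.
Proof. by rewrite /echeck /= !onth_drop ![(off + _)%N]addnC. Qed.

Lemma echeck_take W n e : ebound n e -> echeck (take n W) e = echeck W e.
Proof. by case/andP=> h1 h2; rewrite /echeck !onth_take. Qed.

Lemma tinfo_bound t : all (ebound (nn t)) (tinfo t).2.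
Proof.
elim/term_ind2: t => // s ch H.
by rewrite tinfo_node /= nn_node -add1n; apply: tgo_bound.
Qed.

Lemma go_chk ch a : foldr (fun c acc => (forall P W, tchk P c W = comp W [:: (P, c)]) /\ acc) True ch ->
  forall k off W, onth W 0 = Some a -> 0 < off ->
  [&& size (drop off W) == sumn (map nn ch), dchk (tgo ch k off).1 (drop off W)
    & all (echeck W) (tgo ch k off).2] = comp (drop off W) (kidsA (fun k => arrP B k a) k ch).
Proof.
elim: ch => [|c l IHl] H k off W Wa off0.
  by rewrite /= andbT comp_nil /dchk; case: (drop _ _).
case: H => Hc Hl.
rewrite /= -/(nn c) -[(arrP B k a, c) :: _]cat1s comp_cat /nnL /= addn0 -Hc drop_drop [(nn c + off)%N]addnC.
rewrite -(IHl Hl k.+1 (off + nn c) W Wa); last by rewrite ltn_addr.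
set X := drop off W.
have -> : drop (off + nn c) W = drop (nn c) X by rewrite /X drop_drop addnC.
have [lt|ge] := ltnP (size X) (nn c).
  rewrite /tchk size_take_min (minn_idPr (ltnW lt)) (ltn_eqF lt) /=.
  by rewrite (ltn_eqF (leq_trans lt (leq_addr _ _))).
rewrite /tchk size_take_min (minn_idPl ge) eqxx /=.
rewrite -{1 2}(cat_take_drop (nn c) X) size_cat size_take_min (minn_idPl ge) eqn_add2l.
rewrite /dchk zip_cat; last by rewrite size_take_min (minn_idPl ge).
rewrite !all_cat all_map.
have -> : all (fun e => echeck W (e.1.1 + off, e.1.2, e.2 + off)%N) (tinfo c).2 =
          all (echeck (take (nn c) X)) (tinfo c).2.
  apply: eq_in_all => e /(allP (tinfo_bound c)) hb.
  by rewrite echeck_shift echeck_take.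
have -> : all (echeck W) (if is_node c then [:: (0%N, k, off)] else [::]) =
          (if is_node c then rchk (arrP B k a) (take (nn c) X) else true).
  case: ifP => // /nn_pos hc /=; rewrite andbT.
  by rewrite /echeck /rchk onth_take // Wa /X onth_drop addn0.
rewrite /dchk; bsolve.
Qed.

Lemma tchk_comp t : forall P W, tchk P t W = comp W [:: (P, t)].
Proof.
elim/term_ind2: t => [|s ch H] P W.
  by rewrite /tchk /dchk comp_leaf comp_nil; case: W.
case: W => [|a W].
  by rewrite /tchk nn_node.
rewrite comp_node cats0.
have := @go_chk ch a H 1 1 (a :: W) erefl (ltn0Sn 0).
rewrite /= drop0 => <-.
rewrite /tchk nn_node eqSS tinfo_node /= /dchk /= -/(size W) /rchk /=.
bsolve.
Qed.

Lemma forest_chk f : forall off W,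
  [&& size (drop off W) == size (finfo_aux f off).1.1,
      all (fun i => if onth W i is Some a then rootP B a else false) (finfo_aux f off).1.2,
      dchk (finfo_aux f off).1.1 (drop off W)
    & all (echeck W) (finfo_aux f off).2] = comp (drop off W) [seq (rootP B, t) | t <- f].
Proof.
elim: f => [|t f IHf] off W.
  by rewrite /= andbT comp_nil /dchk; case: (drop _ _).
rewrite /= -/(nn t) -[(rootP B, t) :: _]cat1s comp_cat /nnL /= addn0 -tchk_comp drop_drop [(nn t + off)%N]addnC.
rewrite -(IHf (off + nn t) W).
set X := drop off W.
have -> : drop (off + nn t) W = drop (nn t) X by rewrite /X drop_drop addnC.
have [lt|ge] := ltnP (size X) (nn t).
  rewrite /tchk size_take_min (minn_idPr (ltnW lt)) (ltn_eqF lt) /= size_cat.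
  by rewrite (ltn_eqF (leq_trans lt (leq_addr _ _))).
rewrite /tchk size_take_min (minn_idPl ge) eqxx /= size_cat.
rewrite -{1 2}(cat_take_drop (nn t) X) size_cat size_take_min (minn_idPl ge) eqn_add2l.
rewrite /dchk zip_cat; last by rewrite size_take_min (minn_idPl ge).
rewrite !all_cat all_map.
have -> : all (fun e => echeck W (e.1.1 + off, e.1.2, e.2 + off)%N) (tinfo t).2 =
          all (echeck (take (nn t) X)) (tinfo t).2.
  apply: eq_in_all => e /(allP (tinfo_bound t)) hb.
  by rewrite echeck_shift echeck_take.
have -> : all (fun i => if onth W i is Some a then rootP B a else false)
            (if is_node t then [:: off] else [::]) =
          (if is_node t then rchk (rootP B) (take (nn t) X) else true).
  case: ifP => // /nn_pos hc /=; rewrite andbT.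
  by rewrite /rchk onth_take // /X onth_drop addn0.
rewrite /dchk; bsolve.
Qed.

Lemma compatible_comp f w : compatible B f w = comp w [seq (rootP B, t) | t <- f].
Proof.
rewrite /compatible /finfo.
have := forest_chk f 0 w; rewrite drop0.
by case: (finfo_aux f 0) => [[ds rs] es] /= <-.
Qed.

End Comp.
End Trees.

Section Shuffle.
Variables (A1 A2 : Type) (K : fieldType).
Local Open Scope ring_scope.

Lemma shuffle_nil_r (u : seq A1) : shuffle u ([::] : seq A2) = [:: map inl u].
Proof. by case: u. Qed.

Lemma threc (F : seq (A1 + A2) -> K) (u : seq A1) (v : seq A2) :
  \sum_(w <- shuffle u v) F w =
    (if u is [::] then (if v is [::] then F [::] else 0) else 0)
  + (if u is a :: u' then \sum_(w <- shuffle u' v) F (inl a :: w) else 0)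
  + (if v is b :: v' then \sum_(w <- shuffle u v') F (inr b :: w) else 0).
Proof.
case: u => [|a u]; case: v => [|b v].
- by rewrite /= big_seq1 !addr0.
- by rewrite /= !big_seq1 !add0r.
- by rewrite shuffle_nil_r shuffle_nil_r !big_seq1 add0r addr0.
- by rewrite /= big_cat !big_map add0r.
Qed.
End Shuffle.

Section Main.
Variables (Sig A1 A2 : Type) (B1 : fla Sig A1) (B2 : fla Sig A2) (K : fieldType).
Local Open Scope ring_scope.

Notation Bs := (sum_fla B1 B2).

Inductive kind := Mixed of pred A1 | Forced of pred A2.

Definition toSum (e : kind) : pred (A1 + A2) :=
  match e with
  | Mixed P => fun y => match y with inl a => P a | inr b => rootP B2 b end
  | Forced P => fun y => match y with inl _ => false | inr b => P b end
  end.

Definition toSumE (e : kind * term Sig) := (toSum e.1, e.2).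

Definition ch1 (e : kind * term Sig) : seq (seq (pred A1 * term Sig) * seq (pred A2 * term Sig)) :=
  match e.1 with
  | Mixed P => [seq ([:: (P, p.1)], [seq (rootP B2, x) | x <- p.2]) | p <- decomps e.2]
  | Forced P => [:: ([::], [:: (P, e.2)])]
  end.

Fixpoint choices (L : seq (kind * term Sig)) :=
  match L with
  | [::] => [:: ([::], [::])]
  | e :: L' => [seq (x.1 ++ y.1, x.2 ++ y.2) | x <- ch1 e, y <- choices L']
  end.

Definition Lam L u v : K := \sum_(w <- shuffle u v) (comp Bs w (map toSumE L))%:R.
Definition Rr L u v : K :=
  \sum_(GH <- choices L) (comp B1 u GH.1)%:R * (comp B2 v GH.2)%:R.

Fixpoint dgo (l : seq (term Sig)) : seq (seq (term Sig) * seq (term Sig)) :=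
  match l with
  | [::] => [:: ([::], [::])]
  | c :: l' => [seq (p.1 :: q.1, p.2 ++ q.2) | p <- decomps c, q <- dgo l']
  end.

Lemma decomps_node s ch :
  decomps (Node s ch) = (Leaf, [:: Node s ch]) :: [seq (Node s q.1, q.2) | q <- dgo ch].
Proof. by []. Qed.

Lemma choices_cat (F : _ -> K) L1 L2 :
  \sum_(GH <- choices (L1 ++ L2)) F GH =
  \sum_(x <- choices L1) \sum_(y <- choices L2) F (x.1 ++ y.1, x.2 ++ y.2).
Proof.
elim: L1 F => [|e L1 IH] F.
  by rewrite /= big_seq1; apply: eq_bigr => -[].
rewrite /= !big_allpairs_dep; apply: eq_bigr => x _.
rewrite IH; apply: eq_bigr => y _; apply: eq_bigr => z _.
by rewrite !catA.
Qed.

Lemma choices_kidsM (F : _ -> K) a ch k :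
  \sum_(GH <- choices (kidsA (fun k => Mixed (arrP B1 k a)) k ch)) F GH =
  \sum_(q <- dgo ch) F (kidsA (fun k => arrP B1 k a) k q.1, [seq (rootP B2, x) | x <- q.2]).
Proof.
elim: ch F k => [|c l IH] F k.
  by rewrite /= !big_seq1.
rewrite /= !big_allpairs_dep /ch1 /= big_map; apply: eq_bigr => p _.
rewrite IH; apply: eq_bigr => q _.
by rewrite map_cat.
Qed.

Lemma choices_kidsF b ch k :
  choices (kidsA (fun k => Forced (arrP B2 k b)) k ch) =
  [:: ([::], kidsA (fun k => arrP B2 k b) k ch)].
Proof. by elim: ch k => //= c l IH k; rewrite IH. Qed.

Lemma toSum_kidsM a ch k :
  map toSumE (kidsA (fun k => Mixed (arrP B1 k a)) k ch) = kidsA (fun k => arrP Bs k (inl a)) k ch.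
Proof. by elim: ch k => //= c l IH k; rewrite IH. Qed.

Lemma toSum_kidsF b ch k :
  map toSumE (kidsA (fun k => Forced (arrP B2 k b)) k ch) = kidsA (fun k => arrP Bs k (inr b)) k ch.
Proof. by elim: ch k => //= c l IH k; rewrite IH. Qed.

Lemma Lam_leaf e L u v : Lam ((e, Leaf) :: L) u v = Lam L u v.
Proof. by rewrite /Lam; apply: eq_bigr => w _; rewrite /= comp_leaf. Qed.

Lemma Rr_leaf e L u v : Rr ((e, Leaf) :: L) u v = Rr L u v.
Proof.
rewrite /Rr /= big_allpairs_dep; case: e => P /=; rewrite big_seq1;
  by apply: eq_bigr => y _; rewrite /= ?comp_leaf.
Qed.

Lemma Lam_nil u v : Lam [::] u v = (nilp u && nilp v)%:R.
Proof.
rewrite /Lam threc; case: u => [|a u]; case: v => [|b v] //=;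
  rewrite ?big1 ?addr0 ?add0r //= => w _; rewrite comp_nil.
Qed.

Lemma Rr_nil u v : Rr [::] u v = (nilp u && nilp v)%:R.
Proof. by rewrite /Rr big_seq1 /= !comp_nil -natrM mulnb. Qed.


Definition coefA (e : kind) (a : A1) := match e with Mixed P => P a | Forced _ => false end.
Definition kidsM (a : A1) (ch : seq (term Sig)) := kidsA (fun k => Mixed (arrP B1 k a)) 1 ch.
Definition kidsF (b : A2) (ch : seq (term Sig)) := kidsA (fun k => Forced (arrP B2 k b)) 1 ch.

Lemma nat_and (b c : bool) : ((b && c)%:R : K) = b%:R * c%:R.
Proof. by case: b; rewrite ?mul1r ?mul0r. Qed.

Lemma sum_and (X : Type) (r : seq X) (b : bool) (F : X -> bool) :
  \sum_(i <- r) ((b && F i)%:R : K) = b%:R * \sum_(i <- r) (F i)%:R.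
Proof. by rewrite mulr_sumr; apply: eq_bigr => i _; rewrite nat_and. Qed.

Lemma map_toSumE_cons e t L : map toSumE ((e, t) :: L) = (toSum e, t) :: map toSumE L.
Proof. by []. Qed.

Lemma choices_Mnode P s ch L : choices ((Mixed P, Node s ch) :: L) =
  [seq ((P, Leaf) :: y.1, (rootP B2, Node s ch) :: y.2) | y <- choices L] ++
  [seq (x.1 ++ y.1, x.2 ++ y.2) | x <- [seq ([:: (P, Node s q.1)], [seq (rootP B2, x) | x <- q.2]) | q <- dgo ch], y <- choices L].
Proof.
rewrite /= -/(dgo ch); congr (_ ++ flatten _); rewrite -!map_comp.
by apply: eq_map => q.
Qed.

Lemma choices_Fnode P s ch L : choices ((Forced P, Node s ch) :: L) =
  [seq (y.1, (P, Node s ch) :: y.2) | y <- choices L].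
Proof. by rewrite /= cats0. Qed.

Lemma Lam_node e s ch L u v : Lam ((e, Node s ch) :: L) u v =
  (if u is a :: u' then (coefA e a && decP B1 s a)%:R * Lam (kidsM a ch ++ L) u' v else 0) +
  (if v is b :: v' then (toSum e (inr b) && decP B2 s b)%:R * Lam (kidsF b ch ++ L) u v' else 0).
Proof.
rewrite /Lam threc map_toSumE_cons.
have E1 a u' : \sum_(w <- shuffle u' v) ((comp Bs (inl a :: w) ((toSum e, Node s ch) :: map toSumE L))%:R : K) =
   (coefA e a && decP B1 s a)%:R * \sum_(w <- shuffle u' v) (comp Bs w (map toSumE (kidsM a ch ++ L)))%:R.
  rewrite mulr_sumr; apply: eq_bigr => w _; rewrite comp_node andbA map_cat toSum_kidsM.
  have -> : toSum e (inl a) = coefA e a by case: e.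
  by rewrite /kids nat_and.
have E2 b v' : \sum_(w <- shuffle u v') ((comp Bs (inr b :: w) ((toSum e, Node s ch) :: map toSumE L))%:R : K) =
   (toSum e (inr b) && decP B2 s b)%:R * \sum_(w <- shuffle u v') (comp Bs w (map toSumE (kidsF b ch ++ L)))%:R.
  rewrite mulr_sumr; apply: eq_bigr => w _; rewrite comp_node andbA map_cat toSum_kidsF.
  by rewrite /kids nat_and.
case: u v E1 E2 => [|a u] [|b v] E1 E2; rewrite ?E1 ?E2 /= ?add0r ?addr0 //.
Qed.

Lemma G2 (X : Type) (r : seq X) (F1 : X -> seq (pred A1 * term Sig))
   (F2 : X -> seq (pred A2 * term Sig)) Q s ch u v :
  \sum_(y <- r) ((comp B1 u (F1 y))%:R * (comp B2 v ((Q, Node s ch) :: F2 y))%:R : K) =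
  if v is b :: v' then (Q b && decP B2 s b)%:R *
     \sum_(y <- r) (comp B1 u (F1 y))%:R * (comp B2 v' (kids B2 b ch ++ F2 y))%:R else 0.
Proof.
case: v => [|b v]; first by rewrite big1 // => y _; rewrite comp_node0 mulr0.
rewrite mulr_sumr; apply: eq_bigr => y _.
by rewrite comp_node andbA nat_and mulrCA.
Qed.

Lemma G1 (X Y : Type) (r : seq X) (r2 : seq Y) (F1 : X -> seq (term Sig)) (F1' : Y -> seq (pred A1 * term Sig))
   (H : X -> Y -> seq (pred A2 * term Sig)) P s u v :
  \sum_(q <- r) \sum_(y <- r2) ((comp B1 u ((P, Node s (F1 q)) :: F1' y))%:R * (comp B2 v (H q y))%:R : K) =
  if u is a :: u' then (P a && decP B1 s a)%:R *
     \sum_(q <- r) \sum_(y <- r2) (comp B1 u' (kids B1 a (F1 q) ++ F1' y))%:R * (comp B2 v (H q y))%:R else 0.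
Proof.
case: u => [|a u]; first by rewrite big1 // => q _; rewrite big1 // => y _; rewrite comp_node0 mul0r.
rewrite mulr_sumr; apply: eq_bigr => q _; rewrite mulr_sumr; apply: eq_bigr => y _.
by rewrite comp_node andbA nat_and mulrA.
Qed.

Lemma Rr_node e s ch L u v : Rr ((e, Node s ch) :: L) u v =
  (if u is a :: u' then (coefA e a && decP B1 s a)%:R * Rr (kidsM a ch ++ L) u' v else 0) +
  (if v is b :: v' then (toSum e (inr b) && decP B2 s b)%:R * Rr (kidsF b ch ++ L) u v' else 0).
Proof.
have EF b u0 v0 : Rr (kidsF b ch ++ L) u0 v0 =
    \sum_(y <- choices L) (comp B1 u0 y.1)%:R * (comp B2 v0 (kids B2 b ch ++ y.2))%:R.
  by rewrite /Rr choices_cat /kidsF choices_kidsF big_seq1.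
have EM a u0 v0 : Rr (kidsM a ch ++ L) u0 v0 =
    \sum_(q <- dgo ch) \sum_(y <- choices L)
      (comp B1 u0 (kids B1 a q.1 ++ y.1))%:R * (comp B2 v0 ([seq (rootP B2, x) | x <- q.2] ++ y.2))%:R.
  by rewrite /Rr choices_cat /kidsM (choices_kidsM (fun x => \sum_(y <- choices L) _)).
rewrite /Rr in EF EM.
case: e => P.
- rewrite /Rr choices_Mnode big_cat big_map big_allpairs_dep big_map /=.
  under eq_bigr => y _ do rewrite comp_leaf.
  rewrite G1 G2 addrC.
  case: u => [|a u]; case: v => [|b v]; rewrite ?EF ?EM ?mul0r //.
- rewrite /Rr choices_Fnode big_map /= G2.
  by case: u => [|a u]; case: v => [|b v]; rewrite ?EF ?mul0r ?add0r.
Qed.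

Lemma Lam_Rr n : forall L u v, (size u + size v <= n)%N -> Lam L u v = Rr L u v.
Proof.
elim: n => [|n IHn] L u v Hn; elim: L => [|[e [|s ch]] L IHL].
- by rewrite Lam_nil Rr_nil.
- by rewrite Lam_leaf Rr_leaf.
- rewrite Lam_node Rr_node; clear IHL.
  by case: u Hn => [|a u] Hn; case: v Hn => [|b v] Hn //=; move: Hn; rewrite /= addSn.
- by rewrite Lam_nil Rr_nil.
- by rewrite Lam_leaf Rr_leaf.
- rewrite Lam_node Rr_node; clear IHL.
  case: u Hn => [|a u] Hn; case: v Hn => [|b v] Hn //=; rewrite ?IHn //=; move: Hn => /=; lia.
Qed.

Lemma coprod_choices (F : seq (pred A1 * term Sig) -> seq (pred A2 * term Sig) -> K) f :
  \sum_(gh <- coprod f) F [seq (rootP B1, t) | t <- gh.1] [seq (rootP B2, t) | t <- gh.2] =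
  \sum_(GH <- choices [seq (Mixed (rootP B1), t) | t <- f]) F (filt GH.1) (filt GH.2).
Proof.
elim: f F => [|t f IH] F.
  by rewrite /= !big_seq1.
rewrite /= !big_allpairs_dep /ch1 /= big_map; apply: eq_bigr => p _.
under eq_bigr => q _ do rewrite !map_cat.
rewrite (IH (fun g h => F ([seq (rootP B1, t) | t <- if is_node p.1 then [:: p.1] else [::]] ++ g)
                                     ([seq (rootP B2, t) | t <- rd p.2] ++ h))).
apply: eq_bigr => y _; rewrite /filt /= !filter_cat filter_map.
by case: p.1.
Qed.

End Main.

From Stdlib Require Import FunctionalExtensionality.
Local Open Scope ring_scope.

Theorem proposition4p4 (K : fieldType) (hK : [pchar K] =i pred0)
  (Sig : Type) (ar : Sig -> nat) (A1 A2 : Type)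
  (B1 : fla Sig A1) (B2 : fla Sig A2) (f : forest Sig)
  (hf : reduced_forest ar f) :
  theta (r_alpha K (sum_fla B1 B2) f) = tensor_r K B1 B2 (coprod f).
Proof.
apply: functional_extensionality => -[u v].
rewrite /theta /tensor_r /r_alpha /=.
have -> : \sum_(w <- shuffle u v) ((compatible (sum_fla B1 B2) f w)%:R : K) =
          Lam B1 B2 K [seq (Mixed A2 (rootP B1), t) | t <- f] u v.
  rewrite /Lam; apply: eq_bigr => w _; rewrite compatible_comp -map_comp.
  by congr ((comp _ w _)%:R); apply: eq_map => t.
rewrite (Lam_Rr _ _ _ _ (leqnn _)) /Rr.
under eq_bigr => gh _ do rewrite !compatible_comp.
rewrite (coprod_choices B1 B2 (fun g h => (comp B1 u g)%:R * (comp B2 v h)%:R)).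
by apply: eq_bigr => GH _; rewrite !comp_filt.
Qed.
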